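(* Let $M$ be an algebraic number field of degree $m$ with ring of integers $\mathbb{Z}_M$ and integral basis $(1,\omega_2,\ldots,\omega_m)$. Let $\alpha$ be an algebraic integer over $M$ of degree $n$ over $M$, let $K=M(\alpha)$, and let $0\neq\mu\in\mathbb{Z}_M$. Define \[ c_{hji}=\tfrac12\left|\alpha^{(hj)}-\alpha^{(hi)}\right|\quad(1\le h\le m,\ 1\le i,j\le n,\ i\ne j), \qquad c_{hi}=\frac{|\mu^{(h)}|}{\prod_{1\le j\le n,\,j\ne i}c_{hji}}\quad(1\le h\le m,\ 1\le i\le n), \] \[ c_1=\max_{h,j,i}\frac{\sqrt[n]{|\mu^{(h)}|}}{c_{hji}}\ \ (\text{max over }1\le h\le m,\ 1\le i,j\le n,\ i\ne j),\qquad c_3=\frac{\sqrt[n]{\overline{|\mu|}}}{\overline{|\alpha|}},\qquad c_4=\max(c_1,c_3), \] \[ c_5=2c_2\,\overline{|\alpha|},\qquad d_{hi}=c_{hi}\,c_5^{\,n-1}\quad(1\le h\le m,\ 1\le i\le n), \] where $c_2$ is the row norm of $S^{-1}$ (the maximum over the rows of $S^{-1}$ of the sum of absolute values of the entries in that row), $S$ being the $m\times m$ matrix whose $j$-th row is $(1,\omega_2^{(j)},\ldots,\omega_m^{(j)})$. Suppose $X,Y\in\mathbb{Z}_M$ satisfy $N_{K/M}(X-\alpha Y)=\mu$ and $\overline{|Y|}>c_4$. Write $X=x_1+\omega_2x_2+\cdots+\omega_mx_m$, $Y=y_1+\omega_2y_2+\cdots+\omega_my_m$ with $x_i,y_i\in\mathbb{Z}$,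 put $A=\max(\max_i|x_i|,\max_i|y_i|)$ and $\beta=X-\alpha Y$. Then there exist indices $h,i$ with $1\le h\le m$, $1\le i\le n$ such that \[ |\beta^{(hi)}|\le d_{hi}\,A^{1-n}. \]
   Context: Let $\sigma_1,\ldots,\sigma_m$ be the embeddings of $M$ into $\mathbb{C}$; for $\gamma\in M$ write $\gamma^{(j)}=\sigma_j(\gamma)$. Let $f(x)$ be the monic relative defining polynomial of $\alpha$ over $M$, and for $j=1,\ldots,m$ let $\alpha^{(j1)},\ldots,\alpha^{(jn)}$ be the roots of the polynomial obtained by applying $\sigma_j$ to the coefficients of $f$. For $\gamma\in K$, $\gamma^{(jk)}$ denotes the image of $\gamma$ under the embedding of $K$ into $\mathbb{C}$ extending $\sigma_j$ and sending $\alpha$ to $\alpha^{(jk)}$; thus $\beta^{(hi)}=X^{(h)}-\alpha^{(hi)}Y^{(h)}$. For an algebraic number $\gamma$, its size $\overline{|\gamma|}$ is the maximum of the absolute values of its conjugates; in particular $\overline{|\alpha|}=\max_{j,k}|\alpha^{(jk)}|$, $\overline{|Y|}=\max_j|Y^{(j)}|$, $\overline{|\mu|}=\max_j|\mu^{(j)}|$. It is assumed that the $\alpha^{(hj)}$, $1\le j\le n$, are pairwise distinct for each $h$ (as they are, $f$ being irreducible over $M$), so that all $c_{hji}>0$. *)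

(* Defs.v *)
From HB Require Import structures.
From mathcomp Require Import all_boot all_order all_algebra all_field.
Set Implicit Arguments. Unset Strict Implicit. Unset Printing Implicit Defensive.
Import Order.TTheory GRing.Theory Num.Theory.
Local Open Scope ring_scope.

Definition algint (K : nzRingType) (x : K) : Prop :=
  integralOver (intr : int -> K) x.

Section Defs.
Variables (M : fieldExtType rat) (m n : nat).
Variable sigma : 'I_m -> {rmorphism M -> algC}.
Variable alpha : 'I_m -> 'I_n -> algC.
Variable w : 'I_m -> M.
Variable mu : M.

Definition c_hji (h : 'I_m) (j i : 'I_n) : algC := `|alpha h j - alpha h i| / 2.

Definition c_hi (h : 'I_m) (i : 'I_n) : algC :=
  `|sigma h mu| / \prod_(j < n | j != i) c_hji h j i.

Definition house (x : M) : algC := \big[Num.max/0]_(j < m) `|sigma j x|.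

Definition house_alpha : algC :=
  \big[Num.max/0]_(j < m) \big[Num.max/0]_(k < n) `|alpha j k|.

Definition c1 : algC :=
  \big[Num.max/0]_(h < m) \big[Num.max/0]_(j < n) \big[Num.max/0]_(i < n | i != j)
     (n.-root `|sigma h mu| / c_hji h j i).

Definition Smat : 'M[algC]_m := \matrix_(j < m, i < m) sigma j (w i).

Definition c2 : algC :=
  \big[Num.max/0]_(j < m) \sum_(i < m) `|invmx Smat j i|.

Definition c3 : algC := n.-root (house mu) / house_alpha.
Definition c4 : algC := Num.max c1 c3.
Definition c5 : algC := 2 * c2 * house_alpha.
Definition d_hi (h : 'I_m) (i : 'I_n) : algC := c_hi h i * c5 ^+ (n - 1).

Definition beta_conj (X Y : M) (h : 'I_m) (i : 'I_n) : algC :=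
  sigma h X - alpha h i * sigma h Y.

(* h-th conjugate of N_{K/M}(X - alpha Y): product of the images of
   X - alpha Y under the n embeddings of K extending sigma_h *)
Definition relnorm_conj (X Y : M) (h : 'I_m) : algC :=
  \prod_(i < n) beta_conj X Y h i.
End Defs.

Definition Acoef (m : nat) (x y : 'I_m -> int) : int :=
  Num.max (\big[Num.max/0]_(i < m) `|x i|) (\big[Num.max/0]_(i < m) `|y i|).

(* Main.v *)
Require Import Defs.
From HB Require Import structures.
From mathcomp Require Import all_boot all_order all_algebra all_field.
From mathcomp Require Import ring.
Import Order.TTheory GRing.Theory Num.Theory.
Local Open Scope ring_scope.

Set Implicit Arguments. Unset Strict Implicit. Unset Printing Implicit Defensive.

Lemma sig_scale (M : fieldExtType rat) (s : {rmorphism M -> algC}) (q : rat) (v : M) :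
  s (q *: v) = ratr q * s v.
Proof. by rewrite -mulr_algl alg_num_field rmorphM /= fmorph_rat. Qed.

Lemma span_w (M : fieldExtType rat) (m : nat)
  (hdeg : \dim (fullv : {vspace M}) = m) (w : 'I_m -> M)
  (hwfree : forall c : 'I_m -> int, \sum_(i < m) w i *~ c i = 0 -> forall i, c i = 0) :
  forall x : M, exists q : 'I_m -> rat, x = \sum_(i < m) q i *: w i.
Proof.
set wt := [tuple w i | i < m].
have fr : free wt.
  apply/freeP => k hk i.
  have {}hk : \sum_(i < m) k i *: w i = 0.
    by rewrite -[RHS]hk; apply: eq_bigr => j _; rewrite nth_mktuple.
  pose D := \prod_(j < m) denq (k j).
  pose c i := numq (k i) * \prod_(j < m | j != i) denq (k j).
  have cE j : (c j)%:~R = k j * D%:~R :> rat.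
    rewrite /D (bigD1 j) //= intrM numqE intrM mulrA; congr (_ * _).
  have D0 : D != 0 by apply/prodf_neq0 => j _; exact: denq_neq0.
  have hc : \sum_(i < m) w i *~ c i = 0.
    transitivity ((D%:~R : rat) *: \sum_(i < m) k i *: w i); last by rewrite hk scaler0.
    rewrite scaler_sumr.
    by apply: eq_bigr => j _; rewrite -scaler_int cE scalerA mulrC.
  have /eqP := hwfree c hc i; rewrite -(intr_eq0 rat) cE mulf_eq0 intr_eq0 (negbTE D0) orbF.
  by move/eqP.
have bas : basis_of fullv wt.
  by rewrite basisEfree fr subvf size_tuple hdeg leqnn.
move=> x; exists (fun i => coord wt i x).
rewrite {1}(coord_basis bas (memvf x)); apply: eq_bigr => i _; by rewrite nth_mktuple.
Qed.
Lemma bmax_seq (I : eqType) (r : seq I) (P : pred I) (F : I -> algC) :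
  (forall i, P i -> 0 <= F i) ->
  0 <= \big[Num.max/0]_(j <- r | P j) F j /\
  (forall i, i \in r -> P i -> F i <= \big[Num.max/0]_(j <- r | P j) F j).
Proof.
move=> F0; elim: r => [|a r [B0 IH]]; first by rewrite big_nil.
rewrite big_cons; case: ifP => Pa.
  have cmp : F a >=< \big[Num.max/0]_(j <- r | P j) F j.
    by apply: real_comparable; apply: ger0_real => //; apply: F0.
  split.
    by rewrite comparable_le_max // B0 orbT.
  move=> i; rewrite inE => /orP [/eqP -> _|ir Pi].
    by rewrite comparable_le_max // lexx.
  by rewrite comparable_le_max // IH // orbT.
split=> // i; rewrite inE => /orP [/eqP -> |ir Pi]; first by rewrite Pa.
exact: IH.
Qed.

Lemma bmax_ub (I : finType) (P : pred I) (F : I -> algC) :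
  (forall i, P i -> 0 <= F i) -> forall i, P i -> F i <= \big[Num.max/0]_(j | P j) F j.
Proof.
move=> F0 i Pi; have [_ H] := bmax_seq (index_enum I) F0.
by apply: H; rewrite ?mem_index_enum.
Qed.

Lemma bmax_ge0 (I : finType) (P : pred I) (F : I -> algC) :
  (forall i, P i -> 0 <= F i) -> 0 <= \big[Num.max/0]_(j | P j) F j.
Proof. by move=> F0; have [] := bmax_seq (index_enum I) F0. Qed.

Lemma bmax_le (I : finType) (P : pred I) (F : I -> algC) (b : algC) :
  (forall i, P i -> 0 <= F i) -> 0 <= b -> (forall i, P i -> F i <= b) ->
  \big[Num.max/0]_(j | P j) F j <= b.
Proof.
move=> F0 b0 Fb.
suff /andP [] : 0 <= \big[Num.max/0]_(j | P j) F j <= b by [].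
elim/big_rec: _ => [|j x Pj /andP [x0 xb]]; first by rewrite lexx.
have cmp : F j >=< x by apply: real_comparable; apply: ger0_real => //; apply: F0.
by rewrite comparable_le_max // x0 orbT /= comparable_ge_max // Fb.
Qed.

Lemma ex_max_seq (I : eqType) (F : I -> algC) (r : seq I) (a : I) :
  (forall i, F i \is Num.real) -> exists i, forall j, j \in a :: r -> F j <= F i.
Proof.
move=> Fr; elim: r a => [|b r IH] a.
  by exists a => j; rewrite inE => /eqP ->.
have [i Hi] := IH b.
have [ai|ia] := orP (real_leVge (Fr a) (Fr i)).
  exists i => j; rewrite inE => /orP [/eqP -> //|]; exact: Hi.
exists a => j; rewrite inE => /orP [/eqP -> //|jr].
exact: le_trans (Hi j jr) ia.
Qed.

Lemma ex_max (I : finType) (F : I -> algC) (i0 : I) :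
  (forall i, F i \is Num.real) -> exists i, forall j, F j <= F i.
Proof.
move=> Fr; have [i Hi] := ex_max_seq (enum I) i0 Fr.
by exists i => j; apply: Hi; rewrite inE mem_enum orbT.
Qed.

Lemma ex_min (I : finType) (F : I -> algC) (i0 : I) :
  (forall i, F i \is Num.real) -> exists i, forall j, F i <= F j.
Proof.
move=> Fr; have [|i Hi] := @ex_max I (fun i => - F i) i0.
  by move=> i; rewrite realN.
by exists i => j; rewrite -lerN2 Hi.
Qed.
Lemma dedekind (M : fieldType) (k : nat) (s : 'I_k -> {rmorphism M -> algC}) :
  (forall j l, j != l -> exists x, s j x != s l x) ->
  forall c : 'I_k -> algC, (forall x, \sum_(j < k) c j * s j x = 0) -> forall j, c j = 0.
Proof.
elim: k s => [|k IH] s sD c H; first by case.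
pose lst : 'I_k.+1 := ord_max.
pose s' (j : 'I_k) := s (widen_ord (leqnSn k) j).
pose c' (j : 'I_k) := c (widen_ord (leqnSn k) j).
have Hr x : \sum_(j < k) c' j * s' j x = - (c lst * s lst x).
  by apply/eqP; rewrite -addr_eq0; have := H x; rewrite big_ord_recr /= => ->.
have key y : forall x, \sum_(j < k) (c' j * (s' j y - s lst y)) * s' j x = 0.
  move=> x.
  have -> : \sum_(j < k) (c' j * (s' j y - s lst y)) * s' j x =
     \sum_(j < k) c' j * s' j (y * x) - s lst y * \sum_(j < k) c' j * s' j x.
    rewrite mulr_sumr -sumrB; apply: eq_bigr => j _; rewrite rmorphM /=; ring.
  rewrite !Hr rmorphM /=; ring.
have wne (j : 'I_k) : widen_ord (leqnSn k) j != lst.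
  by rewrite -val_eqE /= neq_ltn ltn_ord.
have sD' : forall j1 l1 : 'I_k, j1 != l1 -> exists x, s' j1 x != s' l1 x.
  move=> j1 l1 jl; apply: sD; apply: contra jl => /eqP.
  by move/(congr1 val) => /= /val_inj ->.
have c'0 (j : 'I_k) : c' j = 0.
  have [y hy] := sD _ _ (wne j).
  have /eqP := IH s' sD' (fun j => c' j * (s' j y - s lst y)) (key y) j.
  by rewrite mulf_eq0 subr_eq0 (negbTE hy) orbF => /eqP.
have cl : c lst = 0.
  have := Hr 1; rewrite big1 => [|j _]; last by rewrite c'0 mul0r.
  by rewrite rmorph1 mulr1 => /eqP; rewrite eq_sym oppr_eq0 => /eqP.
move=> j; case: (unliftP ord_max j) => [j' ->|->] //.
have -> : lift ord_max j' = widen_ord (leqnSn k) j' by apply: val_inj; exact: lift_max.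
exact: c'0.
Qed.

Lemma m_gt0 (M : fieldExtType rat) (m : nat)
  (hdeg : \dim (fullv : {vspace M}) = m) (w : 'I_m -> M)
  (hwfree : forall c : 'I_m -> int, \sum_(i < m) w i *~ c i = 0 -> forall i, c i = 0) :
  (0 < m)%N.
Proof.
case: m hdeg w hwfree => // hdeg w hwfree.
have [q hq] := span_w hdeg hwfree 1.
by move: hq; rewrite big_ord0 => /eqP; rewrite oner_eq0.
Qed.

Lemma Smat_unit (M : fieldExtType rat) (m : nat)
  (hdeg : \dim (fullv : {vspace M}) = m)
  (sigma : 'I_m -> {rmorphism M -> algC})
  (hsigma : forall j k : 'I_m, j != k -> exists x : M, sigma j x != sigma k x)
  (w : 'I_m -> M)
  (hwfree : forall c : 'I_m -> int, \sum_(i < m) w i *~ c i = 0 -> forall i, c i = 0) :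
  Smat sigma w \in unitmx.
Proof.
rewrite unitmxE unitfE; apply/negP => /det0P [v v0 vS].
have hw i : \sum_(j < m) v 0 j * sigma j (w i) = 0.
  move/matrixP: vS => /(_ 0 i); rewrite !mxE.
  by rewrite /Smat; under eq_bigr do rewrite mxE.
have hx x : \sum_(j < m) v 0 j * sigma j x = 0.
  have [q ->] := span_w hdeg hwfree x.
  transitivity (\sum_(i < m) ratr (q i) * \sum_(j < m) v 0 j * sigma j (w i)).
    rewrite (eq_bigr (fun j => \sum_(i < m) v 0 j * (ratr (q i) * sigma j (w i)))); last first.
      move=> j _; rewrite rmorph_sum /= mulr_sumr; apply: eq_bigr => i _.
      by rewrite sig_scale.
    rewrite exchange_big /=; apply: eq_bigr => i _.
    rewrite mulr_sumr; apply: eq_bigr => j _; ring.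
  by rewrite big1 // => i _; rewrite hw mulr0.
have := dedekind hsigma hx.
move=> h0; move/eqP: v0; apply; apply/matrixP => i j.
by rewrite ord1 mxE h0.
Qed.

Lemma prod_ge1 (k : nat) (a : 'I_k -> algC) : (0 < k)%N -> (forall j, 0 <= a j) ->
  1 <= \prod_(j < k) a j -> exists j, 1 <= a j.
Proof.
case: k a => // k a _ a0 h1.
have [j hj] := @ex_max _ a ord0 (fun i => ger0_real (a0 i)).
exists j; case: (boolP (1 <= a j)) => // /negP nle; exfalso.
have lt1 : a j < 1 by rewrite real_ltNge ?ger0_real ?a0 //; apply/negP.
have : \prod_(i < k.+1) a i < \prod_(i < k.+1) (1 : algC).
  apply: ltr_prod; first by apply/hasP; exists ord0; rewrite ?mem_index_enum.
  by move=> i _; rewrite a0 /=; apply: le_lt_trans (hj i) lt1.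
by rewrite big1_eq => /(le_lt_trans h1); rewrite ltxx.
Qed.

Lemma norm_ge1 (M : fieldExtType rat) (m : nat)
  (hdeg : \dim (fullv : {vspace M}) = m)
  (sigma : 'I_m -> {rmorphism M -> algC})
  (hsigma : forall j k : 'I_m, j != k -> exists x : M, sigma j x != sigma k x)
  (w : 'I_m -> M)
  (hwint : forall i, algint (w i))
  (hwfree : forall c : 'I_m -> int, \sum_(i < m) w i *~ c i = 0 -> forall i, c i = 0)
  (hwspan : forall x : M, algint x -> exists c : 'I_m -> int, x = \sum_(i < m) w i *~ c i)
  (z : M) : algint z -> z != 0 -> exists h, 1 <= `|sigma h z|.
Proof.
move=> zi z0.
have hB i : exists c : 'I_m -> int, z * w i = \sum_(k < m) w k *~ c k.
  exact: hwspan _ (integral_mul zi (hwint i)).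
have hB' i : exists c : {ffun 'I_m -> int}, z * w i == \sum_(k < m) w k *~ c k.
  have [c hc] := hB i; exists (finfun c); rewrite hc; apply/eqP; apply: eq_bigr => k _; by rewrite ffunE.
pose B i := xchoose (hB' i).
have BE i : z * w i = \sum_(k < m) w k *~ B i k := eqP (xchooseP (hB' i)).
pose Bm : 'M[int]_m := \matrix_(i, k) B i k.
set S := Smat sigma w.
have Su : S \in unitmx := Smat_unit hdeg hsigma hwfree.
have eqM : diag_mx (\row_j sigma j z) *m S = S *m (map_mx intr Bm)^T.
  apply/matrixP => j i; rewrite mul_diag_mx !mxE.
  have := congr1 (sigma j) (BE i); rewrite rmorphM /= => ->.
  rewrite rmorph_sum /=; apply: eq_bigr => k _.
  by rewrite !mxE rmorphMz mulrzr.
have detE : \prod_(j < m) sigma j z = (\det Bm)%:~R.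
  have := congr1 determinant eqM.
  rewrite !det_mulmx det_diag det_tr det_map_mx [in RHS]mulrC.
  have dS : \det S != 0 by rewrite -unitfE -unitmxE.
  move=> hh; have := mulIf dS hh => <-; apply: eq_bigr => j _; by rewrite mxE.
have p0 : \prod_(j < m) sigma j z != 0.
  by apply/prodf_neq0 => j _; rewrite fmorph_eq0.
have : 1 <= \prod_(j < m) `|sigma j z|.
  rewrite -normr_prod detE; move: p0; rewrite detE intr_eq0 => d0.
  by rewrite -intr_norm ler1z -gtz0_ge1 normr_gt0.
apply: prod_ge1 => //; exact: m_gt0 hdeg w hwfree.
Qed.

Lemma algint_pull (M : fieldExtType rat) (s : {rmorphism M -> algC}) (z : M) :
  algint (s z) -> algint z.
Proof.
case=> p pm pr; exists p => //.
rewrite -(fmorph_root s) -map_poly_comp.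
by rewrite (eq_map_poly (fun k => rmorph_int s k)).
Qed.

Lemma alpha_inj (M : fieldExtType rat) (s : {rmorphism M -> algC}) (n : nat) (f : {poly M})
  (hfmon : f \is monic) (hfirr : irreducible_poly f) (hfsz : size f = n.+1)
  (a : 'I_n -> algC) (ha : map_poly s f = \prod_(k < n) ('X - (a k)%:P)) :
  injective a.
Proof.
have n0 : (0 < n)%N by have := hfirr.1; rewrite hfsz.
have sepf : separable_poly f.
  rewrite unlock coprimep_def.
  case: (eqVneq (size (gcdp f f^`())) 1%N) => // gn1.
  have geq := hfirr.2 _ gn1 (dvdp_gcdl f f^`()).
  have ff' : f %| f^`() by rewrite -(eqp_dvdl _ geq) dvdp_gcdr.
  have d0 : f^`() != 0.
    apply/eqP => h; have := congr1 (fun p : {poly M} => s (p`_n.-1)) h.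
    rewrite coef_deriv coef0 prednK // rmorph0 rmorphMn /=.
    have -> : f`_n = 1 by have := monicP hfmon; rewrite lead_coefE hfsz.
    rewrite rmorph1 => /eqP; rewrite pnatr_eq0 => /eqP nz; by rewrite nz in n0.
  have := dvdp_leq d0 ff'; rewrite leqNgt lt_size_deriv ?monic_neq0 //.
have : separable_poly (map_poly s f) by rewrite separable_map.
rewrite ha -(big_map a predT (fun x => 'X - x%:P)) separable_prod_XsubC => u.
apply/injectiveP; rewrite /injectiveb /dinjectiveb enumT.
by move: u; rewrite [index_enum _]unlock.
Qed.

Lemma coord_bound (M : fieldExtType rat) (m : nat)
  (sigma : 'I_m -> {rmorphism M -> algC}) (w : 'I_m -> M)
  (Su : Smat sigma w \in unitmx) (Z : M) (z : 'I_m -> int)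
  (hz : Z = \sum_(i < m) w i *~ z i) (b : algC) (b0 : 0 <= b)
  (hb : forall j, `|sigma j Z| <= b) :
  forall k, `|(z k)%:~R : algC| <= c2 sigma w * b.
Proof.
set S := Smat sigma w.
have e : \col_j sigma j Z = S *m \col_i ((z i)%:~R).
  apply/matrixP => j l; rewrite !mxE hz rmorph_sum /=; apply: eq_bigr => i _.
  by rewrite !mxE rmorphMz mulrzr.
have e2 : \col_i ((z i)%:~R) = invmx S *m \col_j sigma j Z by rewrite e mulKmx.
move=> k; move/matrixP: e2 => /(_ k 0); rewrite !mxE => ->.
apply: le_trans (ler_norm_sum _ _ _) _.
apply: (@le_trans _ _ (\sum_(j < m) `|invmx S k j| * b)).
  apply: ler_sum => j _; rewrite mxE normrM; apply: ler_wpM2l => //.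
rewrite -mulr_suml; apply: ler_wpM2r => //.
rewrite /c2; apply: (@bmax_ub _ predT (fun j => \sum_(i < m) `|invmx S j i|)) => // j _.
exact: sumr_ge0.
Qed.

Lemma prod_const_ord (R : comNzRingType) n (x : R) : \prod_(i < n) x = x ^+ n.
Proof. by rewrite prodr_const card_ord. Qed.
Lemma intmax_bound (m : nat) (F : 'I_m -> int) (b : algC) : 0 <= b ->
  (forall k, (F k)%:~R <= b) -> ((\big[Num.max/0]_(k < m) F k)%:~R : algC) <= b.
Proof.
move=> b0 Fb; elim/big_rec: _ => [|k acc _ hacc] //.
by rewrite maxElt; case: ifP.
Qed.

Unset Implicit Arguments. Set Strict Implicit.

Theorem theorem2
  (M : fieldExtType rat) (m : nat)
  (hdeg : \dim (fullv : {vspace M}) = m)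
  (sigma : 'I_m -> {rmorphism M -> algC})
  (hsigma : forall j k : 'I_m, j != k -> exists x : M, sigma j x != sigma k x)
  (w : 'I_m -> M)
  (hw1 : forall i : 'I_m, val i = 0%N -> w i = 1)
  (hwint : forall i, algint (w i))
  (hwfree : forall c : 'I_m -> int, \sum_(i < m) w i *~ c i = 0 -> forall i, c i = 0)
  (hwspan : forall x : M, algint x -> exists c : 'I_m -> int, x = \sum_(i < m) w i *~ c i)
  (n : nat) (f : {poly M})
  (hfmon : f \is monic) (hfirr : irreducible_poly f) (hfsz : size f = n.+1)
  (alpha : 'I_m -> 'I_n -> algC)
  (halpha : forall j, map_poly (sigma j) f = \prod_(k < n) ('X - (alpha j k)%:P))
  (halpha_int : forall j k, algint (alpha j k))
  (mu : M) (hmu0 : mu != 0) (hmuint : algint mu)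
  (X Y : M) (hX : algint X) (hY : algint Y)
  (hnorm : forall h : 'I_m, relnorm_conj sigma alpha X Y h = sigma h mu)
  (hYbig : house sigma Y > c4 sigma alpha mu)
  (x y : 'I_m -> int)
  (hx : X = \sum_(i < m) w i *~ x i) (hy : Y = \sum_(i < m) w i *~ y i) :
  exists (h : 'I_m) (i : 'I_n),
    `|beta_conj sigma alpha X Y h i|
      <= d_hi sigma alpha w mu h i * ((Acoef x y)%:~R : algC) ^- (n - 1).
Proof.
have m0 : (0 < m)%N := m_gt0 hdeg hwfree.
have n0 : (0 < n)%N by have := hfirr.1; rewrite hfsz.
have Su := Smat_unit hdeg hsigma hwfree.
pose j0 : 'I_m := Ordinal m0.
pose i0 : 'I_n := Ordinal n0.
set beta := beta_conj sigma alpha X Y.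
set ha := house_alpha alpha.
set Yh := house sigma Y.
have ha0 : 0 <= ha.
  apply: bmax_ge0 => j _; exact: bmax_ge0.
have hmuh0 : 0 <= house sigma mu by apply: bmax_ge0.
have c3ge0 : 0 <= c3 sigma alpha mu.
  by rewrite /c3 divr_ge0 // rootC_ge0.
have c1ge0 : 0 <= c1 sigma alpha mu.
  apply: bmax_ge0 => h _; apply: bmax_ge0 => j _; apply: bmax_ge0 => i _.
  by rewrite divr_ge0 ?rootC_ge0 // divr_ge0.
have c4ge : c3 sigma alpha mu <= c4 sigma alpha mu.
  rewrite /c4 comparable_le_max ?lexx ?orbT //.
  by apply: real_comparable; apply: ger0_real.
have c3Y : c3 sigma alpha mu < Yh := le_lt_trans c4ge hYbig.
have Yh0 : 0 < Yh := le_lt_trans c3ge0 c3Y.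
have [h hh] := @ex_max _ (fun j => `|sigma j Y|) j0 (fun _ => normr_real _).
have hYh : Yh = `|sigma h Y|.
  apply/eqP; rewrite eq_le; apply/andP; split.
    by apply: bmax_le => // j _.
  by apply: (@bmax_ub _ predT (fun j => `|sigma j Y|)).
have [i hi] := @ex_min _ (fun i => `|beta h i|) i0 (fun _ => normr_real _).
exists h, i.
have hprod : \prod_(k < n) beta h k = sigma h mu by rewrite -hnorm.
have ainj := alpha_inj hfmon hfirr hfsz (halpha h).
have step1 j : j != i -> c_hji alpha h j i * Yh <= `|beta h j|.
  move=> ji; rewrite /c_hji hYh mulrAC ler_pdivrMr // -normrM.
  have -> : (alpha h j - alpha h i) * sigma h Y = beta h i - beta h j.
    by rewrite /beta /beta_conj; ring.
  apply: le_trans (ler_normB _ _) _.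
  by rewrite mulr_natr mulr2n lerD2r hi.
set P := \prod_(j < n | j != i) c_hji alpha h j i.
have Pc : \prod_(j < n | j != i) Yh = Yh ^+ (n - 1).
  rewrite -(@eq_bigl _ _ _ _ _ (fun j => j \in predC1 i)) //.
  by rewrite prodr_const cardC1 card_ord subn1.
have P0 : 0 < P.
  apply: prodr_gt0 => j ji; rewrite /c_hji divr_gt0 // normr_gt0 subr_eq0.
  by apply: contra ji => /eqP /ainj ->.
have step2 : P * Yh ^+ (n - 1) <= \prod_(j < n | j != i) `|beta h j|.
  rewrite -Pc -big_split /=; apply: ler_prod => j ji.
  rewrite step1 // andbT mulr_ge0 // ?(ltW Yh0) //.
  by rewrite /c_hji divr_ge0.
have step3 : `|beta h i| * \prod_(j < n | j != i) `|beta h j| = `|sigma h mu|.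
  by rewrite -hprod normr_prod [RHS](bigD1 i).
have step4 : `|beta h i| <= c_hi sigma alpha mu h i * (Yh ^+ (n - 1))^-1.
  have YP : 0 < P * Yh ^+ (n - 1) by rewrite mulr_gt0 // exprn_gt0.
  rewrite /c_hi -/P -mulrA -invfM ler_pdivlMr //.
  by rewrite -step3 ler_wpM2l.
rewrite /d_hi -mulrA; apply: le_trans step4 _; apply: ler_wpM2l.
  by rewrite /c_hi divr_ge0 // ltW.
case En: (n - 1)%N => [|k]; first by rewrite !expr0 invr1 ?divr1 ?mulr1.
have n2 : (1 < n)%N by rewrite -subn_gt0 En.
pose z := f`_0.
have hz h' : sigma h' z = \prod_(k' < n) (- alpha h' k').
  have := congr1 (fun p => p.[0]) (halpha h').
  rewrite horner_coef0 coef_map /= -/z => ->.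
  rewrite horner_prod; apply: eq_bigr => k' _; by rewrite hornerXsubC sub0r.
have zint : algint z.
  apply: (@algint_pull _ (sigma j0)); rewrite hz.
  elim/big_rec: _ => [|k' acc _ hacc]; first exact: integral1.
  exact: integral_mul (integral_opp (halpha_int j0 k')) hacc.
have z0 : z != 0.
  apply/negP => /eqP z0.
  have : root f 0 by rewrite /root horner_coef0 -/z z0.
  rewrite -dvdp_XsubCl => d.
  have := hfirr.2 _ _ d; rewrite size_XsubC => /(_ isT) /eqp_size.
  by rewrite size_XsubC hfsz => -[] n1; rewrite -n1 in n2.
have [h1 hh1] := norm_ge1 hdeg hsigma hwint hwfree hwspan zint z0.
have [k1 hk1] : exists k1, 1 <= `|alpha h1 k1|.
  apply: prod_ge1 => //; rewrite (_ : \prod_(k' < n) _ = `|sigma h1 z|) //.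
  by rewrite hz normr_prod; apply: eq_bigr => k' _; rewrite normrN.
have hab j k' : `|alpha j k'| <= ha.
  apply: le_trans (@bmax_ub _ predT (fun k' => `|alpha j k'|) _ k' isT) _ => //.
  apply: (@bmax_ub _ predT (fun j => \big[Num.max/0]_(k' < n) `|alpha j k'|)) => // j' _.
  exact: bmax_ge0.
have ha1 : 1 <= ha := le_trans hk1 (hab h1 k1).
have haP : 0 < ha := lt_le_trans ltr01 ha1.
have hYj j : `|sigma j Y| <= Yh by rewrite hYh hh.
have hXb j : `|sigma j X| <= 2 * ha * Yh.
  have [k2 hk2] := @ex_min _ (fun k' => `|beta j k'|) i0 (fun _ => normr_real _).
  have bk : `|beta j k2| <= ha * Yh.
    rewrite real_leNgt ?ger0_real ?mulr_ge0 // ?(ltW Yh0) //; apply/negP => lt.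
    have r1 : n.-root (house sigma mu) < ha * Yh.
      by move: c3Y; rewrite /c3 ltr_pdivrMr // mulrC.
    have e1 : house sigma mu < (ha * Yh) ^+ n.
      rewrite -{1}(rootCK n0 (house sigma mu)) ltr_pXn2r // qualifE /=.
        by rewrite rootC_ge0.
      by rewrite mulr_ge0 // ltW.
    have e2 : (ha * Yh) ^+ n < `|beta j k2| ^+ n.
      by rewrite ltr_pXn2r // qualifE /= ?mulr_ge0 // ltW.
    have e3 : `|beta j k2| ^+ n <= house sigma mu.
      rewrite -prod_const_ord; apply: (@le_trans _ _ `|sigma j mu|).
        rewrite -(hnorm j) /relnorm_conj normr_prod; apply: ler_prod => k' _.
        by rewrite normr_ge0 hk2.
      exact: (@bmax_ub _ predT (fun j => `|sigma j mu|)).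
    by have := lt_le_trans (lt_trans e1 e2) e3; rewrite ltxx.
  have -> : sigma j X = beta j k2 + alpha j k2 * sigma j Y.
    by rewrite /beta /beta_conj; ring.
  apply: le_trans (ler_normD _ _) _; rewrite normrM -mulrA mulr_natl mulr2n.
  by apply: lerD => //; apply: ler_pM => //.
have c20 : 0 <= c2 sigma w.
  by apply: bmax_ge0 => j _; apply: sumr_ge0.
have hxk k' : `|(x k')%:~R : algC| <= c5 sigma alpha w * Yh.
  have := coord_bound Su hx _ hXb k'; rewrite /c5 -/ha.
  have -> : c2 sigma w * (2 * ha * Yh) = 2 * c2 sigma w * ha * Yh by ring.
  apply; by rewrite !mulr_ge0 // ltW.
have hyk k' : `|(y k')%:~R : algC| <= c5 sigma alpha w * Yh.
  apply: le_trans (coord_bound Su hy (ltW Yh0) hYj k') _.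
  have -> : c5 sigma alpha w * Yh = c2 sigma w * Yh * (2 * ha).
    rewrite /c5 -/ha; ring.
  apply: ler_peMr; first by rewrite mulr_ge0 // ltW.
  by rewrite mulr_natl mulr2n (le_trans ha1) // lerDr ltW.
set A := Acoef x y.
have AY : (A%:~R : algC) <= c5 sigma alpha w * Yh.
  have b0 : 0 <= c5 sigma alpha w * Yh by apply: le_trans (hyk j0); exact: normr_ge0.
  rewrite /A /Acoef maxElt; case: ifP => _; apply: intmax_bound => // k';
    by rewrite intr_norm.
have A1 : 1 <= A.
  case: (boolP [exists k', y k' != 0]) => [/existsP [k' yk]|none].
    rewrite /A /Acoef le_max; apply/orP; right.
    by apply: (bigmax_sup k') => //; rewrite -gtz0_ge1 normr_gt0.
  have yk0 k' : y k' = 0 by apply/eqP; apply: contraNT none => nz; apply/existsP; exists k'.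
  have Y0 : Y = 0 by rewrite hy big1 // => k' _; rewrite yk0 mulr0z.
  by move: Yh0; rewrite hYh Y0 rmorph0 normr0 ltxx.
have A0 : 0 < (A%:~R : algC) by rewrite (lt_le_trans ltr01) // ler1z.
have YK : 0 < Yh ^+ k.+1 by rewrite exprn_gt0.
rewrite ler_pdivlMr ?exprn_gt0 // mulrC ler_pdivrMr // -exprMn.
by apply: lerXn2r => //; rewrite qualifE /= ?(ltW A0) ?(le_trans (ltW A0) AY).
Qed.
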